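(* Let $M\ge 2$ and $d\ge 2$ be integers, and let $\{p(a,b,c|x,y,z)\}$ be any tripartite nonsignalling probability distribution in which each of the three parties $A,B,C$ chooses one of $M$ measurements, $A_x,B_y,C_z$ with $x,y,z\in\{1,\dots,M\}$, each having $d$ outcomes labelled by $\{0,1,\dots,d-1\}$ (identified with $\mathbb{Z}_d$). Then for every pair $i,j\in\{1,\dots,M\}$ and for $X$ denoting either $A$ or $B$, $$I^{2,M,d}_{AB}+\langle[X_i-C_j]\rangle+\langle[C_j-X_i]\rangle\ \ge\ d-1,$$ where $$I^{2,M,d}_{AB}=\sum_{\alpha=1}^{M}\Big(\langle[A_\alpha-B_\alpha]\rangle+\langle[B_\alpha-A_{\alpha+1}]\rangle\Big),$$ with the convention that $A_{M+1}$ denotes the variable $[A_1+1]$ (so the term $\langle[B_M-A_{M+1}]\rangle$ equals $\langle[B_M-A_1-1]\rangle$).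
   Context: For a random variable $\Omega$ built as an integer linear combination of outcomes, $[\Omega]$ denotes $\Omega$ modulo $d$, and $\langle[\Omega]\rangle=\sum_{i=0}^{d-1} i\,P([\Omega]=i)$. Each such expectation is computed from the (well-defined, by no-signalling) marginal joint distribution of the two measurements involved; e.g. $\langle[A_\alpha-B_\alpha]\rangle$ uses $p(a,b|x=\alpha,y=\alpha)$ and $\langle[X_i-C_j]\rangle$ uses the marginal distribution of the outcomes of $X_i$ and $C_j$. Nonsignalling means that the marginal distribution of any subset of parties does not depend on the measurement choices of the remaining parties. *)

(* Defs.v *)
From mathcomp Require Import all_boot all_order all_algebra.
Set Implicit Arguments. Unset Strict Implicit. Unset Printing Implicit Defensive.
Import Order.TTheory GRing.Theory Num.Theory.
Local Open Scope ring_scope.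

(* A tripartite behaviour: p x y z a b c = p(a,b,c|x,y,z), measurement
   settings in 'I_M (0-based: paper's setting k is k-1 here),
   outcomes in 'I_d identified with Z_d. *)
Definition behaviour (R : realFieldType) (M d : nat) :=
  'I_M -> 'I_M -> 'I_M -> 'I_d -> 'I_d -> 'I_d -> R.

(* probability distribution for each choice of settings, and nonsignalling:
   the marginal of every pair of parties does not depend on the setting of
   the remaining party (single-party marginals then follow). *)
Definition nonsignalling (R : realFieldType) (M d : nat) (p : behaviour R M d) : Prop :=
  (forall x y z a b c, 0 <= p x y z a b c) /\
  (forall x y z, \sum_(a < d) \sum_(b < d) \sum_(c < d) p x y z a b c = 1) /\
  (forall x y z z' a b, \sum_(c < d) p x y z a b c = \sum_(c < d) p x y z' a b c) /\
  (forall x y y' z a c, \sum_(b < d) p x y z a b c = \sum_(b < d) p x y' z a b c) /\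
  (forall x x' y z b c, \sum_(a < d) p x y z a b c = \sum_(a < d) p x' y z a b c).

(* two-party marginals; the setting of the third party is arbitrary
   (well defined by nonsignalling), we take it equal to the first setting. *)
Definition margAB (R : realFieldType) M d (p : behaviour R M d) (x y : 'I_M) (a b : 'I_d) : R :=
  \sum_(c < d) p x y x a b c.
Definition margAC (R : realFieldType) M d (p : behaviour R M d) (x z : 'I_M) (a c : 'I_d) : R :=
  \sum_(b < d) p x x z a b c.
Definition margBC (R : realFieldType) M d (p : behaviour R M d) (y z : 'I_M) (b c : 'I_d) : R :=
  \sum_(a < d) p y y z a b c.

Definition modd (d : nat) (w : int) : nat := `|(w %% (d%:Z))%Z|%N.

Definition expmod (R : realFieldType) d (q : 'I_d -> 'I_d -> R) (f : int -> int -> int) : R :=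
  \sum_(u < d) \sum_(v < d) (modd d (f (nat_of_ord u)%:Z (nat_of_ord v)%:Z))%:R * q u v.

(* In 0-based indexing, alpha+1 is ordS alpha and
   the extra "-1" appears exactly when alpha is the last index. *)
Definition I_AB (R : realFieldType) M d (p : behaviour R M d) : R :=
  \sum_(al < M)
    (expmod (margAB p al al) (fun a b => a - b) +
     expmod (fun b a => margAB p (ordS al) al a b)
            (fun b a => b - a - (nat_of_ord al == M.-1)%:Z)).

(* Main.v *)
Require Import Defs.
From mathcomp Require Import all_boot all_order all_algebra.
From mathcomp Require Import zify ring lra.
Import Order.TTheory GRing.Theory Num.Theory.
Set Implicit Arguments. Unset Strict Implicit. Unset Printing Implicit Defensive.
Local Open Scope ring_scope.

Lemma modd_tri d (x y z : int) : (0 < d)%N -> z = x + y ->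
  (modd d z <= modd d x + modd d y)%N.
Proof.
move=> d0 ->; rewrite /modd.
have dz : (0 < d%:Z) by rewrite ltz_nat.
have dn : (d%:Z != 0) by rewrite gt_eqF.
have h1 := modz_ge0 x dn. have h2 := modz_ge0 y dn. have h3 := modz_ge0 (x+y) dn.
have e := modzDm x y d.
set rx := (x %% d)%Z in h1 e *. set ry := (y %% d)%Z in h2 e *.
set r := ((x + y) %% d)%Z in h3 e *.
have e2 := divz_eq (rx + ry) d. rewrite e in e2.
have q0 : (0 <= ((rx + ry) %/ d)%Z) by rewrite divz_ge0 // addr_ge0.
set q := ((rx + ry) %/ d)%Z in e2 q0.
have : r <= rx + ry.
  rewrite e2 lerDr; exact: mulr_ge0 q0 (ltW dz).
lia.
Qed.

Lemma modd_m1 d : (0 < d)%N -> modd d (-1) = d.-1.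
Proof.
move=> d0; rewrite /modd.
have -> : (-1 : int) = Negz 0 by [].
rewrite modNz_nat // mod0n; lia.
Qed.

Lemma ordS_val M (a : 'I_M) : nat_of_ord (ordS a) = if nat_of_ord a == M.-1 then 0%N else (nat_of_ord a).+1.
Proof.
rewrite /ordS /=. case: M a => [[]//|M] a /=.
case: eqP => h. by rewrite h modnn.
rewrite modn_small //. have := ltn_ord a. lia.
Qed.

Definition E (R : realFieldType) M d (p : behaviour R M d) (z x y : 'I_M)
  (f : 'I_d -> 'I_d -> 'I_d -> nat) : R :=
  \sum_(a < d) \sum_(b < d) \sum_(c < d) (f a b c)%:R * p x y z a b c.

Lemma E_le (R : realFieldType) M d (p : behaviour R M d) z x y f g h :
  (forall a b c, 0 <= p x y z a b c) ->
  (forall a b c, f a b c <= g a b c + h a b c)%N ->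
  E p z x y f <= E p z x y g + E p z x y h.
Proof.
move=> hp H; rewrite /E -big_split /=; apply: ler_sum => a _.
rewrite -big_split; apply: ler_sum => b _; rewrite -big_split; apply: ler_sum => c _.
apply: (@le_trans _ _ ((g a b c + h a b c)%:R * p x y z a b c)).
  apply: ler_wpM2r => //; rewrite ler_nat; exact: H.
by rewrite natrD mulrDl.
Qed.

Lemma E_const (R : realFieldType) M d (p : behaviour R M d) z x y k :
  \sum_(a < d) \sum_(b < d) \sum_(c < d) p x y z a b c = 1 ->
  E p z x y (fun _ _ _ => k) = k%:R.
Proof.
move=> hs; rewrite /E -[RHS]mulr1 -hs mulr_sumr; apply: eq_bigr => a _.
rewrite mulr_sumr; apply: eq_bigr => b _; by rewrite mulr_sumr.
Qed.

Lemma E_ab (R : realFieldType) M d (p : behaviour R M d) z x y g :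
  E p z x y (fun a b c => g a b) = \sum_(a < d) \sum_(b < d) (g a b)%:R * \sum_(c < d) p x y z a b c.
Proof. apply: eq_bigr => a _; apply: eq_bigr => b _; by rewrite mulr_sumr. Qed.

Lemma E_ac (R : realFieldType) M d (p : behaviour R M d) z x y g :
  E p z x y (fun a b c => g a c) = \sum_(a < d) \sum_(c < d) (g a c)%:R * \sum_(b < d) p x y z a b c.
Proof.
apply: eq_bigr => a _; rewrite exchange_big; apply: eq_bigr => c _; by rewrite mulr_sumr.
Qed.

Lemma E_bc (R : realFieldType) M d (p : behaviour R M d) z x y g :
  E p z x y (fun a b c => g b c) = \sum_(b < d) \sum_(c < d) (g b c)%:R * \sum_(a < d) p x y z a b c.
Proof.
rewrite /E exchange_big; apply: eq_bigr => b _; rewrite exchange_big.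
apply: eq_bigr => c _; by rewrite mulr_sumr.
Qed.

Lemma exp_AB (R : realFieldType) M d (p : behaviour R M d)
  (nsz : forall x y z z' a b, \sum_(c < d) p x y z a b c = \sum_(c < d) p x y z' a b c)
  j x y g :
  expmod (margAB p x y) g = E p j x y (fun a b c => modd d (g (nat_of_ord a)%:Z (nat_of_ord b)%:Z)).
Proof.
rewrite /E /expmod /margAB; apply: eq_bigr => a _; apply: eq_bigr => b _.
by rewrite (nsz _ _ x j) mulr_sumr.
Qed.

Lemma exp_BA (R : realFieldType) M d (p : behaviour R M d)
  (nsz : forall x y z z' a b, \sum_(c < d) p x y z a b c = \sum_(c < d) p x y z' a b c)
  j x y g :
  expmod (fun b a => margAB p x y a b) g = E p j x y (fun a b c => modd d (g (nat_of_ord b)%:Z (nat_of_ord a)%:Z)).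
Proof.
rewrite /E /expmod /margAB exchange_big; apply: eq_bigr => a _; apply: eq_bigr => b _.
by rewrite (nsz _ _ x j) mulr_sumr.
Qed.

Lemma exp_AC (R : realFieldType) M d (p : behaviour R M d)
  (nsy : forall x y y' z a c, \sum_(b < d) p x y z a b c = \sum_(b < d) p x y' z a b c)
  j x y g :
  expmod (margAC p x j) g = E p j x y (fun a b c => modd d (g (nat_of_ord a)%:Z (nat_of_ord c)%:Z)).
Proof.
rewrite /E /expmod /margAC; apply: eq_bigr => a _; rewrite exchange_big; apply: eq_bigr => c _.
by rewrite (nsy _ _ y) mulr_sumr.
Qed.

Lemma exp_CA (R : realFieldType) M d (p : behaviour R M d)
  (nsy : forall x y y' z a c, \sum_(b < d) p x y z a b c = \sum_(b < d) p x y' z a b c)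
  j x y g :
  expmod (fun c a => margAC p x j a c) g = E p j x y (fun a b c => modd d (g (nat_of_ord c)%:Z (nat_of_ord a)%:Z)).
Proof.
rewrite /E /expmod /margAC [LHS]exchange_big; apply: eq_bigr => a _; rewrite [RHS]exchange_big; apply: eq_bigr => c _.
by rewrite (nsy _ _ y) mulr_sumr.
Qed.

Lemma exp_BC (R : realFieldType) M d (p : behaviour R M d)
  (nsx : forall x x' y z b c, \sum_(a < d) p x y z a b c = \sum_(a < d) p x' y z a b c)
  j x y g :
  expmod (margBC p y j) g = E p j x y (fun a b c => modd d (g (nat_of_ord b)%:Z (nat_of_ord c)%:Z)).
Proof.
rewrite /E /expmod /margBC [RHS]exchange_big; apply: eq_bigr => b _; rewrite [RHS]exchange_big; apply: eq_bigr => c _.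
by rewrite (nsx _ x) mulr_sumr.
Qed.

Lemma exp_CB (R : realFieldType) M d (p : behaviour R M d)
  (nsx : forall x x' y z b c, \sum_(a < d) p x y z a b c = \sum_(a < d) p x' y z a b c)
  j x y g :
  expmod (fun c b => margBC p y j b c) g = E p j x y (fun a b c => modd d (g (nat_of_ord c)%:Z (nat_of_ord b)%:Z)).
Proof.
rewrite /E /expmod /margBC [LHS]exchange_big [RHS]exchange_big; apply: eq_bigr => b _; rewrite [RHS]exchange_big; apply: eq_bigr => c _.
by rewrite (nsx _ x) mulr_sumr.
Qed.

Lemma offs M (i a : 'I_M) :
  ((i <= a)%N : nat) = ((nat_of_ord a == M.-1) : nat) + ((i < ordS a)%N : nat).
Proof.
rewrite ordS_val; have := ltn_ord i; have := ltn_ord a.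
case: eqP => h; rewrite ?h /=.
  by move=> _ hi; rewrite -ltnS prednK // (leq_ltn_trans _ hi).
by rewrite ltnS.
Qed.

Lemma sum_shift (R : realFieldType) M (i : 'I_M) (G : 'I_M -> nat -> R) :
  \sum_b G b (i <= b)%N = \sum_b G b (i < b)%N + G i 1%N - G i 0%N.
Proof.
rewrite (bigD1 i) //= (bigD1 i (P := predT)) //= leqnn ltnn.
rewrite (eq_bigr (fun b => G b (i < b)%N)); last first.
  by move=> b hb; rewrite ltn_neqAle eq_sym hb.
set S := \sum_(b | _) _. set A := G i _. set B := G i _. 
have -> : A = G i 1%N by []. have -> : B = G i 0%N by [].
ring.
Qed.

Definition aC (R : realFieldType) M d (p : behaviour R M d) j x (t : nat) :=
  expmod (margAC p x j) (fun a c => a - c - t%:Z).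
Definition bC (R : realFieldType) M d (p : behaviour R M d) j y (t : nat) :=
  expmod (margBC p y j) (fun b c => b - c - t%:Z).
Definition LA (R : realFieldType) M d (p : behaviour R M d) al :=
  expmod (margAB p al al) (fun a b => a - b).
Definition LB (R : realFieldType) M d (p : behaviour R M d) (al : 'I_M) :=
  expmod (fun b a => margAB p (ordS al) al a b) (fun b a => b - a - (nat_of_ord al == M.-1)%:Z).

Lemma IAB_eq (R : realFieldType) M d (p : behaviour R M d) :
  I_AB p = \sum_al LA p al + \sum_al LB p al.
Proof. by rewrite /I_AB big_split. Qed.

Lemma step1 (R : realFieldType) M d (p : behaviour R M d) (hd : (0 < d)%N)
  (hp : nonsignalling p) j al t :
  aC p j al t <= LA p al + bC p j al t.
Proof.
case: hp => hpos [_ [nsz [nsy nsx]]].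
rewrite /aC /LA /bC (exp_AC nsy j al al) (exp_AB nsz j) (exp_BC nsx j al).
apply: E_le => // a b c; apply: modd_tri => //; lia.
Qed.

Lemma step2 (R : realFieldType) M d (p : behaviour R M d) (hd : (0 < d)%N)
  (hp : nonsignalling p) j (i al : 'I_M) :
  bC p j al (i <= al)%N <= LB p al + aC p j (ordS al) (i < ordS al)%N.
Proof.
case: hp => hpos [_ [nsz [nsy nsx]]].
rewrite /aC /LB /bC (exp_BC nsx j (ordS al) al) (exp_BA nsz j) (exp_AC nsy j (ordS al) al).
apply: E_le => // a b c; apply: modd_tri => //.
rewrite offs PoszD; lia.
Qed.

Lemma aC0 (R : realFieldType) M d (p : behaviour R M d) j x :
  aC p j x 0 = expmod (margAC p x j) (fun a c => a - c).
Proof. rewrite /aC /expmod; apply: eq_bigr => u _; apply: eq_bigr => v _; by rewrite subr0. Qed.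

Lemma bC0 (R : realFieldType) M d (p : behaviour R M d) j x :
  bC p j x 0 = expmod (margBC p x j) (fun a c => a - c).
Proof. rewrite /bC /expmod; apply: eq_bigr => u _; apply: eq_bigr => v _; by rewrite subr0. Qed.

Lemma rS (R : realFieldType) M (F : 'I_M -> R) : \sum_a F (ordS a) = \sum_b F b.
Proof. by rewrite [RHS](reindex_inj (@ordS_inj M)). Qed.

Lemma partA (R : realFieldType) M d (p : behaviour R M d) (hd : (0 < d)%N)
  (hp : nonsignalling p) j (i : 'I_M) :
  aC p j i 1 <= I_AB p + aC p j i 0.
Proof.
have H : \sum_al aC p j al (i <= al)%N <= I_AB p + \sum_al aC p j (ordS al) (i < ordS al)%N.
  rewrite IAB_eq -!big_split /=; apply: ler_sum => al _.
  have := step1 hd hp j al (i <= al)%N; have := step2 hd hp j i al.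
  set x1 := aC _ _ _ _. set x2 := bC _ _ _ _. set x3 := aC _ _ _ _. lra.
rewrite (rS (fun b => aC p j b (i < b)%N)) (sum_shift i (aC p j)) in H.
lra.
Qed.

Lemma partB (R : realFieldType) M d (p : behaviour R M d) (hd : (0 < d)%N)
  (hp : nonsignalling p) j (i : 'I_M) :
  bC p j i 1 <= I_AB p + bC p j i 0.
Proof.
have H : \sum_al aC p j al (i < al)%N + \sum_al bC p j al (i <= al)%N <=
   I_AB p + \sum_al bC p j al (i < al)%N + \sum_al aC p j (ordS al) (i < ordS al)%N.
  rewrite IAB_eq -!big_split /=; apply: ler_sum => al _.
  have := step1 hd hp j al (i < al)%N; have := step2 hd hp j i al.
  set x1 := aC _ _ _ _. set x2 := bC _ _ _ _. set x3 := aC _ _ _ _. 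
  set x4 := bC _ _ _ _. lra.
rewrite (rS (fun b => aC p j b (i < b)%N)) (sum_shift i (bC p j)) in H.
lra.
Qed.

Theorem theorem1 (R : realFieldType) (M d : nat) (hM : (2 <= M)%N) (hd : (2 <= d)%N)
  (p : behaviour R M d) (hp : nonsignalling p) (i j : 'I_M) :
  (* X = A *)
  (I_AB p + expmod (margAC p i j) (fun a c => a - c)
          + expmod (fun c a => margAC p i j a c) (fun c a => c - a) >= (d.-1)%:R)
  /\
  (* X = B *)
  (I_AB p + expmod (margBC p i j) (fun b c => b - c)
          + expmod (fun c b => margBC p i j b c) (fun c b => c - b) >= (d.-1)%:R).
Proof.
have d0 : (0 < d)%N by apply: leq_trans hd.
have hp' := hp; case: hp' => hpos [hsum [nsz [nsy nsx]]].
split.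
- have h1 := partA d0 hp j i.
  have h2 : (d.-1)%:R <= aC p j i 1 + expmod (fun c a => margAC p i j a c) (fun c a => c - a).
    rewrite /aC (exp_AC nsy j i i) (exp_CA nsy j i i) -(@E_const _ _ _ p j i i (d.-1) (hsum i i j)).
    apply: E_le => // a b c; rewrite -modd_m1 //; apply: modd_tri => //; lia.
  rewrite -aC0. lra.
- have h1 := partB d0 hp j i.
  have h2 : (d.-1)%:R <= bC p j i 1 + expmod (fun c b => margBC p i j b c) (fun c b => c - b).
    rewrite /bC (exp_BC nsx j i i) (exp_CB nsx j i i) -(@E_const _ _ _ p j i i (d.-1) (hsum i i j)).
    apply: E_le => // a b c; rewrite -modd_m1 //; apply: modd_tri => //; lia.
  rewrite -bC0. lra.
Qed.
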